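(* Let $R$ be an integral domain and $\delta,\gamma,p,q\in R$. Let $a=\mathcal{W}(\delta,\gamma,p,q)$ and $u=\mathcal{W}(0,1,p,q)$. Then for every integer $k\ge1$, $$(a_{kn})_{n\ge0}=L^{(u_k,\,-qu_{k-1})}(a),$$ i.e. $a_{kn}=\sum_{i=0}^n\binom{n}{i}u_k^i(-qu_{k-1})^{n-i}a_i$ for all $n\ge0$.
   Context: $\mathcal{W}(\delta,\gamma,p,q)$ denotes the sequence $(a_n)_{n\ge0}$ with $a_0=\delta$, $a_1=\gamma$, $a_n=pa_{n-1}-qa_{n-2}$ for $n\ge2$. For $h,y\in R$, $L^{(h,y)}(a)$ is the sequence $b$ with $b_n=\sum_{i=0}^n\binom{n}{i}h^iy^{n-i}a_i$, with the convention $0^0=1$. *)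

(* Defs.v *)
From mathcomp Require Import all_boot all_algebra.
Set Implicit Arguments. Unset Strict Implicit. Unset Printing Implicit Defensive.
Import GRing.Theory.
Local Open Scope ring_scope.

(* W(delta,gamma,p,q): a_0 = delta, a_1 = gamma, a_n = p a_{n-1} - q a_{n-2}. *)
Fixpoint Wpair (R : ringType) (delta gamma p q : R) (n : nat) : R * R :=
  match n with
  | 0%N => (delta, gamma)
  | n'.+1 => let: (x, y) := Wpair delta gamma p q n' in (y, p * y - q * x)
  end.

Definition W (R : ringType) (delta gamma p q : R) (n : nat) : R :=
  (Wpair delta gamma p q n).1.

(* L^{(h,y)}(a)_n = sum_{i=0}^n C(n,i) h^i y^(n-i) a_i ; x ^+ 0 = 1 gives 0^0 = 1 *)
Definition Ltrans (R : ringType) (h y : R) (a : nat -> R) (n : nat) : R :=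
  \sum_(i < n.+1) (h ^+ i * y ^+ (n - i) * a i) *+ 'C(n, i).

(* Main.v *)
Require Import Defs.
From mathcomp Require Import all_boot all_algebra.
From mathcomp Require Import ring.
Local Open Scope ring_scope.
Import GRing.Theory.

Lemma W0 (R : ringType) (d g p q : R) : W d g p q 0 = d.
Proof. by []. Qed.
Lemma W1 (R : ringType) (d g p q : R) : W d g p q 1 = g.
Proof. by []. Qed.
Lemma WSS (R : ringType) (d g p q : R) n :
  W d g p q n.+2 = p * W d g p q n.+1 - q * W d g p q n.
Proof.
rewrite /W /=.
have H : forall m, (Wpair d g p q m).2 = (Wpair d g p q m.+1).1.
  by move=> m /=; case: (Wpair d g p q m).
rewrite -!H /=; by case: (Wpair d g p q n).
Qed.

Lemma key (R : comRingType) (d g p q : R) m j :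
  W d g p q (j + m.+1) =
  W 0 1 p q m.+1 * W d g p q j.+1 - q * W 0 1 p q m * W d g p q j.
Proof.
elim: m j => [|m IH] j.
  by rewrite addn1 W1 W0; ring.
rewrite -addSnnS IH WSS [W 0 1 p q m.+2]WSS.
ring.
Qed.

Theorem theorem14 (R : idomainType) (delta gamma p q : R) (k : nat) :
  (1 <= k)%N ->
  forall n : nat,
    W delta gamma p q (k * n) =
    Ltrans (W 0 1 p q k) (- q * W 0 1 p q k.-1) (W delta gamma p q) n.
Proof.
case: k => [//|m] _.
set x := W 0 1 p q m.+1; set y := - q * W 0 1 p q m.+1.-1.
set a := W delta gamma p q.
have K : forall j, a (j + m.+1) = x * a j.+1 + y * a j.
  move=> j; rewrite /a key /x /y /=; ring.
suff S : forall n j, a (m.+1 * n + j)%N =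
   \sum_(i < n.+1) (x ^+ i * y ^+ (n - i) * a (i + j)%N) *+ 'C(n, i).
  move=> n; rewrite -[(m.+1 * n)%N]addn0 S /Ltrans.
  by apply: eq_bigr => i _; rewrite addn0.
elim=> [|n IH] j.
  by rewrite muln0 big_ord1 add0n expr0 mul1r bin0 mulr1n subnn expr0 mul1r.
rewrite mulnS (addnC m.+1) -addnA (addnC m.+1) IH.
have E : forall i : 'I_n.+1, (x ^+ i * y ^+ (n - i) * a (i + (j + m.+1))%N) *+ 'C(n, i)
   = (x ^+ i.+1 * y ^+ (n - i) * a (i.+1 + j)%N) *+ 'C(n, i)
   + (x ^+ i * y ^+ (n.+1 - i) * a (i + j)%N) *+ 'C(n, i).
  move=> i; rewrite addnA K -mulrnDl; congr (_ *+ _).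
  rewrite subSn ?(leq_ord i) // !exprS addSn; ring.
rewrite (eq_bigr _ (fun i _ => E i)) big_split /=.
rewrite [in RHS]big_ord_recl /= subn0 bin0 mulr1n expr0 mul1r add0n.
under [in RHS]eq_bigr => i _ do rewrite /bump /= add1n subSS binS mulrnDr.
rewrite big_split /= addrA addrC; congr (_ + _).
rewrite [in RHS]big_ord_recr /= bin_small // mulr0n addr0.
rewrite [in LHS]big_ord_recl /= subn0 bin0 mulr1n expr0 mul1r add0n.
by congr (_ + _); apply: eq_bigr => i _.
Qed.
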